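(* Let $R$ be a commutative ring, $I$ an ideal of $R$ and $n\ge 3$. Then $\mathrm{EO}_{2n}(R,I)\subseteq \mathrm{EO}^1_{2n}(R,I)$.
   Context: Let $\sigma$ be the permutation of $\{1,\dots,2n\}$ with $\sigma(2i)=2i-1$, $\sigma(2i-1)=2i$. Let $\widetilde\psi_n=\sum_{i=1}^n(e_{2i-1,2i}+e_{2i,2i-1})$ and $\mathrm{O}_{2n}(R)=\{\alpha\in\mathrm{GL}_{2n}(R):\alpha^t\widetilde\psi_n\alpha=\widetilde\psi_n\}$. For $z\in R$ and $1\le i\ne j\le 2n$ with $i\ne\sigma(j)$, $oe_{ij}(z)=1_{2n}+z e_{ij}-z e_{\sigma(j)\sigma(i)}$. $\mathrm{EO}_{2n}(R)$ is generated by all $oe_{ij}(z)$; $\mathrm{EO}_{2n}(I)$ is generated by the $oe_{ij}(x)$, $x\in I$; $\mathrm{EO}_{2n}(R,I)$ is the normal closure of $\mathrm{EO}_{2n}(I)$ in $\mathrm{EO}_{2n}(R)$. $\mathrm{EO}^1_{2n}(R,I)$ is the subgroup of $\mathrm{EO}_{2n}(R)$ generated by the elements $oe_{1i}(a)$ and $oe_{j1}(x)$ with $a\in R$, $x\in I$, $3\le i,j\le 2n$. *)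

(* Defs.v *)
From HB Require Import structures.
From mathcomp Require Import all_boot all_order all_algebra.
Set Implicit Arguments. Unset Strict Implicit. Unset Printing Implicit Defensive.
Import GRing.Theory.
Local Open Scope ring_scope.

(* Indices: the paper's {1,...,2n} is represented 0-based as 'I_(2 * n):
   paper index k corresponds to ordinal k-1.  The paper's pairs
   {2i-1, 2i} become {2i-2, 2i-1} = {even, odd}, so sigma is: *)
Definition sig_nat (k : nat) : nat := if odd k then k.-1 else k.+1.

Definition is_ideal (R : comNzRingType) (I : {pred R}) : Prop :=
  [/\ 0 \in I,
      (forall x y, x \in I -> y \in I -> x + y \in I) &
      (forall a x, x \in I -> a * x \in I)].

(* oe_{ij}(z) = 1 + z e_{ij} - z e_{sigma(j) sigma(i)}, entrywise
   (e_{sigma j, sigma i} has entry 1 at (a,b) iff a = sigma j, b = sigma i,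
    iff sigma a = j and sigma b = i since sigma is an involution). *)
Definition oe (R : comNzRingType) (m : nat) (i j : 'I_m) (z : R) : 'M[R]_m :=
  \matrix_(a, b)
    ((a == b)%:R + z * (((a == i) && (b == j)) : bool)%:R
       - z * (((sig_nat a == j) && (sig_nat b == i)) : bool)%:R).

Inductive gen (R : comNzRingType) (m : nat) (S : 'M[R]_m -> Prop) : 'M[R]_m -> Prop :=
| gen_one : gen S 1%:M
| gen_mem x : S x -> gen S x
| gen_mul x y : gen S x -> gen S y -> gen S (x *m y)
| gen_inv x y : gen S x -> x *m y = 1%:M -> y *m x = 1%:M -> gen S y.

Definition oe_adm (m : nat) (i j : 'I_m) : Prop :=
  i != j /\ (i : nat) != sig_nat j.

Definition EO (R : comNzRingType) (n : nat) : 'M[R]_(2 * n) -> Prop :=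
  gen (fun g => exists (i j : 'I_(2 * n)) (z : R), oe_adm i j /\ g = oe i j z).

Definition EO_ideal (R : comNzRingType) (n : nat) (I : {pred R}) : 'M[R]_(2 * n) -> Prop :=
  gen (fun g => exists (i j : 'I_(2 * n)) (x : R),
         [/\ oe_adm i j, x \in I & g = oe i j x]).

Definition EO_rel (R : comNzRingType) (n : nat) (I : {pred R}) : 'M[R]_(2 * n) -> Prop :=
  gen (fun g => exists h k x : 'M[R]_(2 * n),
         [/\ EO h, h *m k = 1%:M, k *m h = 1%:M, EO_ideal I x & g = h *m x *m k]).

(* EO^1_{2n}(R,I): generated by oe_{1i}(a), oe_{j1}(x), a in R, x in I,
   3 <= i, j <= 2n  (0-based: index 0, and indices >= 2). *)
Definition EO1_rel (R : comNzRingType) (n : nat) (I : {pred R}) : 'M[R]_(2 * n) -> Prop :=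
  gen (fun g =>
    (exists (i j : 'I_(2 * n)) (a : R), [/\ (i : nat) = 0%N, (2 <= j)%N & g = oe i j a])
    \/ (exists (j i : 'I_(2 * n)) (x : R),
          [/\ (i : nat) = 0%N, (2 <= j)%N, x \in I & g = oe j i x])).

(* Main.v *)
Require Import Defs.
From HB Require Import structures.
From mathcomp Require Import all_boot all_order all_algebra.
From mathcomp Require Import zify ring.
Set Implicit Arguments. Unset Strict Implicit. Unset Printing Implicit Defensive.
Import GRing.Theory.
Local Open Scope ring_scope.

Lemma sig_natE k : sig_nat k = (k + 1 - 2 * (k %% 2))%N.
Proof. rewrite /sig_nat modn2; case: (odd k) => /=; lia. Qed.

Section Main.
Variable R : comNzRingType.
Variable n : nat.
Local Notation m := (2 * n)%N.
Local Notation M := 'M[R]_m.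

Lemma sig_lt (i : 'I_m) : (sig_nat i < m)%N.
Proof. have := ltn_ord i; rewrite sig_natE; lia. Qed.

Definition sg (i : 'I_m) : 'I_m := Ordinal (sig_lt i).
Lemma sgE i : (sg i : nat) = sig_nat i. Proof. by []. Qed.
Lemma sgK i : sg (sg i) = i.
Proof. apply: val_inj; rewrite /= !sig_natE; lia. Qed.

Lemma ordbF (x y : 'I_m) : (x : nat) <> y -> (x == y) = false.
Proof. by move=> H; apply/eqP => E; apply: H; rewrite E. Qed.
Lemma ordbT (x y : 'I_m) : (x : nat) = y -> (x == y) = true.
Proof. by move=> H; apply/eqP; apply: val_inj. Qed.

Definition dp (i j : 'I_m) : Prop := ((i %/ 2)%N <> (j %/ 2)%N).

Ltac lia' := try unfold dp in *; rewrite ?sgE ?sig_natE;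
  repeat match goal with
  | H : context[nat_of_ord (sg _)] |- _ => rewrite sgE in H
  | H : context[sig_nat _] |- _ => rewrite sig_natE in H end; lia.

Definition same (k l i j : 'I_m) : bool :=
  ((k == i) && (l == j)) || ((k == sg j) && (l == sg i)).

Lemma sg_eqsym (x y : 'I_m) : (sg x == y) = (x == sg y).
Proof. by apply/eqP/eqP => [<-|->]; rewrite sgK. Qed.
Lemma sg_inj_eq (x y : 'I_m) : (sg x == sg y) = (x == y).
Proof. by apply/eqP/eqP => [E|->] //; rewrite -(sgK x) E sgK. Qed.
Lemma eq_sgsym (x y : 'I_m) : (x == sg y) = (y == sg x).
Proof. by rewrite -sg_eqsym eq_sym. Qed.
Lemma eq_sgself (x : 'I_m) : (x == sg x) = false.
Proof. apply: ordbF; lia'. Qed.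

Lemma dpF1 x y : dp x y -> (x == y) = false. Proof. move=> H; apply: ordbF; lia'. Qed.
Lemma dpF2 x y : dp x y -> (y == x) = false. Proof. move=> H; apply: ordbF; lia'. Qed.
Lemma dpF3 x y : dp x y -> (x == sg y) = false. Proof. move=> H; apply: ordbF; lia'. Qed.
Lemma dpF4 x y : dp x y -> (y == sg x) = false. Proof. move=> H; apply: ordbF; lia'. Qed.
Lemma dp_of x y : (x == y) = false -> (x == sg y) = false -> dp x y.
Proof.
move=> /eqP H1 /eqP H2; have H1' : (x : nat) <> y by move=> E; apply: H1; apply: val_inj.
have H2' : (x : nat) <> sg y by move=> E; apply: H2; apply: val_inj.
lia'.
Qed.
Lemma dp_irr x : dp x x -> False. Proof. rewrite /dp; lia. Qed.
Lemma dp_sg1 x : dp x (sg x) -> False. Proof. lia'. Qed.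
Lemma dp_sg2 x : dp (sg x) x -> False. Proof. lia'. Qed.

Ltac bnorm := rewrite ?sgK ?sg_inj_eq ?sg_eqsym ?sgK ?eqxx ?eq_sgself.

Ltac nrm H := repeat first [ rewrite sgK in H | rewrite sg_inj_eq in H | rewrite sg_eqsym in H ].

Ltac bools := bnorm;
  repeat match goal with
  | H : context[sg (sg _)] |- _ => rewrite sgK in H
  | H : context[sg _ == sg _] |- _ => rewrite sg_inj_eq in H
  | H : context[sg _ == _] |- _ => rewrite sg_eqsym in H
  end;
  repeat match goal with
  | H : dp ?x ?y |- _ => let F := fresh "F" in
       first [ have F := dpF1 H; nrm F; progress rewrite F
             | have F := dpF2 H; nrm F; progress rewrite F
             | have F := dpF3 H; nrm F; progress rewrite F
             | have F := dpF4 H; nrm F; progress rewrite F ]; clear F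
  | H : (?x == ?y) = false |- context[?x == ?y] => rewrite H
  | H : (?x == ?y) = false |- context[?y == ?x] => rewrite (eq_sym y x) H
  | H : (?x == sg ?y) = false |- context[?y == sg ?x] => rewrite (eq_sgsym y x) H
  end; rewrite /=.

Ltac dpcontra := exfalso; match goal with
  | H : dp ?x ?x |- _ => exact: (dp_irr H)
  | H : dp ?x (sg ?x) |- _ => exact: (dp_sg1 H)
  | H : dp (sg ?x) ?x |- _ => exact: (dp_sg2 H)
  end.

Definition T (i j : 'I_m) : M := delta_mx i j - delta_mx (sg j) (sg i).

Lemma oeE i j z : oe i j z = 1%:M + z *: T i j.
Proof.
apply/matrixP => a b; rewrite /T !mxE.
have E1 : (sig_nat a == j) = (a == sg j).
  by apply/eqP/eqP => [E|->]; [apply: val_inj; rewrite /= -E !sig_natE; lia | rewrite /= !sig_natE; lia].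
have E2 : (sig_nat b == i) = (b == sg i).
  by apply/eqP/eqP => [E|->]; [apply: val_inj; rewrite /= -E !sig_natE; lia | rewrite /= !sig_natE; lia].
rewrite E1 E2; case: (a == b); case: (a == i); case: (b == j);
  case: (a == sg j); case: (b == sg i) => /=; ring.
Qed.






Lemma Tmul i j k l : T i j *m T k l =
  (j == k)%:R *: delta_mx i l - (j == sg l)%:R *: delta_mx i (sg k)
  - (k == sg i)%:R *: delta_mx (sg j) l + (i == l)%:R *: delta_mx (sg j) (sg k).
Proof.
rewrite /T mulmxBl !mulmxBr !mul_delta_mx_cond sg_inj_eq sg_eqsym (eq_sgsym i k).
rewrite -!scaler_nat; apply/matrixP => a b; rewrite !mxE; ring.
Qed.

Lemma Tbr k l i j : T k l *m T i j - T i j *m T k l =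
  (l == i)%:R *: T k j - (k == j)%:R *: T i l
  - (j == sg l)%:R *: T k (sg i) - (k == sg i)%:R *: T (sg l) j.
Proof.
rewrite !Tmul /T !sgK.
have -> : (l == sg j) = (j == sg l) by rewrite -sg_eqsym eq_sym.
have -> : (i == sg k) = (k == sg i) by rewrite -sg_eqsym eq_sym.
rewrite (eq_sym j k) (eq_sym i l).
apply/matrixP => a b; rewrite !mxE; ring.
Qed.



Lemma adm_dp i j : oe_adm i j <-> dp i j.
Proof.
rewrite /oe_adm /dp; split.
  case=> /eqP H1 /eqP H2 E; have H1' : (i : nat) <> j by move=> E'; apply: H1; apply: val_inj.
  move: H2; rewrite sig_natE; lia.
move=> H; split; apply/eqP.
  by move=> E; apply: H; rewrite E.
rewrite sig_natE; lia.
Qed.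

Ltac simpl0 := rewrite /= ?mulr0n ?mulr1n ?scale0r ?scale1r ?subr0 ?sub0r ?addr0 ?add0r ?oppr0.

Lemma T2 i j : dp i j -> T i j *m T i j = 0.
Proof. move=> H; rewrite Tmul; bools; simpl0; done. Qed.

Lemma prod1 (S U : M) a b : (1%:M + a *: S) *m (1%:M + b *: U) =
   1%:M + a *: S + b *: U + (a * b) *: (S *m U).
Proof.
rewrite mulmxDl !mulmxDr !mul1mx !mulmx1 -!scalemxAl -!scalemxAr scalerA.
apply/matrixP => x y; rewrite !mxE; ring.
Qed.

Lemma GC (S U : M) b c : S *m U = U *m S ->
  (1%:M + b *: S) *m (1%:M + c *: U) = (1%:M + c *: U) *m (1%:M + b *: S).
Proof. by move=> E; rewrite !prod1 E mulrC (addrAC _ (b *: S)). Qed.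

Lemma GS (S U V : M) e b c : S *m U - U *m S = e *: V -> V *m U = 0 -> V *m S = 0 ->
  (1%:M + b *: S) *m (1%:M + c *: U) =
  (1%:M + (e * b * c) *: V) *m (1%:M + c *: U) *m (1%:M + b *: S).
Proof.
move=> E VU VS; rewrite !prod1 VU scaler0 addr0.
have -> : 1%:M + (e*b*c) *: V + c *: U = 1%:M + 1 *: ((e*b*c) *: V + c *: U)
  by rewrite scale1r addrA.
rewrite prod1.
rewrite mulmxDl -!scalemxAl VS scaler0 add0r.
have -> : S *m U = U *m S + e *: V by rewrite -E addrC subrK.
apply/matrixP => x y; rewrite !mxE; ring.
Qed.

Lemma oe0 (i j : 'I_m) : oe i j (0 : R) = 1%:M.
Proof. by rewrite oeE scale0r addr0. Qed.

Lemma oe_add (i j : 'I_m) (a b : R) : dp i j -> oe i j a *m oe i j b = oe i j (a + b).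
Proof. by move=> H; rewrite !oeE prod1 T2 // scaler0 addr0 -addrA -scalerDl. Qed.

Lemma oe_inv (i j : 'I_m) (a : R) : dp i j -> oe i j a *m oe i j (- a) = 1%:M.
Proof. by move=> H; rewrite oe_add // subrr oe0. Qed.

Lemma oe_invl (i j : 'I_m) (a : R) : dp i j -> oe i j (- a) *m oe i j a = 1%:M.
Proof. by move=> H; rewrite oe_add // addNr oe0. Qed.

Lemma T_flip i j : T (sg j) (sg i) = - T i j.
Proof. by rewrite /T !sgK opprB. Qed.

Lemma oe_flip (i j : 'I_m) (a : R) : oe i j a = oe (sg j) (sg i) (- a).
Proof. by rewrite !oeE T_flip scaleNr scalerN opprK. Qed.

Lemma dp_sym i j : dp i j -> dp j i. Proof. rewrite /dp; lia. Qed.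
Lemma dp_flip i j : dp i j -> dp (sg j) (sg i). Proof. rewrite /dp; lia'. Qed.



Definition comm (k l i j : 'I_m) : Prop :=
  forall a b : R, oe k l b *m oe i j a = oe i j a *m oe k l b.

Lemma commT k l i j : T k l *m T i j = T i j *m T k l -> comm k l i j.
Proof. by move=> E a b; rewrite !oeE GC. Qed.

Lemma sumT k l i j p q e : T k l *m T i j - T i j *m T k l = e *: T p q ->
  T p q *m T i j = 0 -> T p q *m T k l = 0 ->
  forall a b : R, oe k l b *m oe i j a = oe p q (e * b * a) *m oe i j a *m oe k l b.
Proof. by move=> E1 E2 E3 a b; rewrite !oeE (GS _ _ E1). Qed.

Lemma T_deg (i j : 'I_m) : (i == sg j) -> T i j = 0.
Proof. by move/eqP=> ->; rewrite /T sgK subrr. Qed.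

Ltac substs := repeat match goal with
  | E : (?x == ?y) = true |- _ => move/eqP: E => E; subst
  end.

Ltac tcomm := apply: commT; rewrite !Tmul; bools; simpl0; try done.
Ltac tzero := rewrite Tmul; bools; simpl0; done.



Lemma classify k l i j : dp k l -> dp i j -> ~~ same k l i j -> ~~ same k l j i ->
  comm k l i j \/ exists p q e, [/\ dp p q,
    (forall a b : R, oe k l b *m oe i j a = oe p q (e * b * a) *m oe i j a *m oe k l b),
    comm k l j i, comm p q i j & ~~ same p q i j].
Proof.
move=> Hkl Hij Hs Ho.
have B := Tbr k l i j.
case E1: (l == i); case E2: (k == j); case E3: (j == sg l); case E4: (k == sg i);
  substs; move: B Hs Ho; rewrite /same; bools; simpl0 => B Hs Ho; try done; try dpcontra.
- case E5: (k == sg j).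
    by left; apply: commT; apply/eqP; rewrite -subr_eq0 B T_deg.
  right; exists k, j, 1; split.
  + by apply: dp_of; bools.
  + by apply: sumT; [rewrite B scale1r | tzero | tzero].
  + tcomm.
  + tcomm.
  + by bools.
- case E5: (i == sg l).
    by left; apply: commT; apply/eqP; rewrite -subr_eq0 B T_deg ?oppr0.
  right; exists i, l, (-1); split.
  + by apply: dp_of; bools.
  + by apply: sumT; [rewrite B scaleN1r | tzero | tzero].
  + tcomm.
  + tcomm.
  + by bools.
- case E5: (k == i).
    by left; apply: commT; apply/eqP; rewrite -subr_eq0 B T_deg ?oppr0 // sgK.
  right; exists k, (sg i), (-1); split.
  + by apply: dp_of; bools.
  + by apply: sumT; [rewrite B scaleN1r | tzero | tzero].
  + tcomm.
  + tcomm.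
  + by bools.
- case E5: (l == j).
    by left; apply: commT; apply/eqP; rewrite -subr_eq0 B T_deg ?oppr0 // sg_inj_eq.
  right; exists (sg l), j, (-1); split.
  + by apply: dp_of; bools.
  + by apply: sumT; [rewrite B scaleN1r | tzero | tzero].
  + tcomm.
  + tcomm.
  + by bools.
- by left; apply: commT; apply/eqP; rewrite -subr_eq0 B.
Qed.

Lemma CF a b d (x y : R) : dp a b -> dp b d -> dp a d ->
  oe a b x *m oe b d y = oe a d (x * y) *m oe b d y *m oe a b x.
Proof.
move=> H1 H2 H3; rewrite -[x * y]mul1r mulrA.
apply: (sumT (k:=a)).
- by rewrite Tbr; bools; simpl0; rewrite ?scale1r.
- tzero.
- tzero.
Qed.

Lemma conjCF a b d (x y : R) : dp a b -> dp b d -> dp a d ->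
  oe a b x *m oe b d y *m oe a b (- x) = oe a d (x * y) *m oe b d y.
Proof. by move=> H1 H2 H3; rewrite CF // -!mulmxA oe_inv // mulmx1. Qed.

Lemma conjCF' a b d (x y : R) : dp a b -> dp b d -> dp a d ->
  oe b d y *m oe a b x *m oe b d (- y) = oe a d (- (x * y)) *m oe a b x.
Proof.
move=> H1 H2 H3.
have E : oe b d y *m oe a b x = oe a d (- (x * y)) *m oe a b x *m oe b d y.
  rewrite -!mulmxA CF // !mulmxA oe_add ?addNr ?oe0 ?mul1mx //.
  
by rewrite E -!mulmxA oe_inv // mulmx1.
Qed.

Lemma comm_first a b d : dp a b -> dp a d -> comm a b a d.
Proof. move=> H1 H2; case E: (b == sg d); tcomm; substs; bools; simpl0; done. Qed.

Lemma comm_second a b d : dp a b -> dp d b -> comm a b d b.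
Proof. move=> H1 H2; case E: (a == sg d); tcomm; substs; bools; simpl0; done. Qed.


Definition cj (h hi y : M) := h *m y *m hi.

Lemma gen_conj (S S' : M -> Prop) h hi : h *m hi = 1%:M -> hi *m h = 1%:M ->
  (forall g, S g -> gen S' (cj h hi g)) -> forall y, gen S y -> gen S' (cj h hi y).
Proof.
move=> E1 E2 HS y; elim=> [|x Sx|x z _ IHx _ IHz|x z _ IH Exz Ezx].
- rewrite /cj mulmx1 E1; exact: gen_one.
- exact: HS.
- have -> : cj h hi (x *m z) = cj h hi x *m cj h hi z.
    by rewrite /cj !mulmxA -(mulmxA _ hi h) E2 mulmx1.
  exact: gen_mul.
- apply: (gen_inv IH).
    by rewrite /cj !mulmxA -(mulmxA _ hi h) E2 mulmx1 -(mulmxA _ x z) Exz mulmx1 E1.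
  by rewrite /cj !mulmxA -(mulmxA _ hi h) E2 mulmx1 -(mulmxA _ z x) Ezx mulmx1 E1.
Qed.

Lemma gen_sub (S S' : M -> Prop) : (forall g, S g -> gen S' g) -> forall y, gen S y -> gen S' y.
Proof.
move=> HS y; elim=> [|x Sx|x z _ IHx _ IHz|x z _ IH Exz Ezx].
- exact: gen_one.
- exact: HS.
- exact: gen_mul.
- exact: (gen_inv IH).
Qed.

Lemma inv_uniq (A B C : M) : A *m B = 1%:M -> C *m A = 1%:M -> B = C.
Proof. by move=> E1 E2; rewrite -[B]mul1mx -E2 -mulmxA E1 mulmx1. Qed.

Variable I : {pred R}.
Hypothesis HI : is_ideal I.
Hypothesis Hn : (3 <= n)%N.

Lemma memI_mull a x : x \in I -> a * x \in I.
Proof. by case: HI => _ _; apply. Qed.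
Lemma memI_mulr a x : x \in I -> x * a \in I.
Proof. by rewrite mulrC; apply: memI_mull. Qed.
Lemma memI_N x : x \in I -> - x \in I.
Proof. by move=> H; rewrite -mulN1r; apply: memI_mull. Qed.
Lemma memI0 : (0 : R) \in I.
Proof. by case: HI. Qed.

Definition rootI (g : M) := exists i j x, [/\ dp i j, x \in I & g = oe i j x].
Definition Sg (g : M) := exists k l i j a c,
  [/\ dp k l, dp i j, c \in I & g = cj (oe k l a) (oe k l (-a)) (oe i j c)].
Definition N := gen Sg.

Lemma rootI_N k l b y : dp k l -> gen rootI y -> N (cj (oe k l b) (oe k l (-b)) y).
Proof.
move=> H; apply: gen_conj; [exact: oe_inv | exact: oe_invl |].
move=> g [i [j [x [Hij Hx ->]]]]; apply: gen_mem; exists k, l, i, j, b, x; split => //.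
Qed.

Lemma rootI_N0 y : gen rootI y -> N y.
Proof.
apply: gen_sub => g [i [j [x [Hij Hx ->]]]]; apply: gen_mem; exists i, j, i, j, 0, x; split => //.
by rewrite /cj oppr0 oe0 mul1mx mulmx1.
Qed.

Lemma cj_same i j b c : dp i j -> cj (oe i j b) (oe i j (-b)) (oe i j c) = oe i j c.
Proof. by move=> H; rewrite /cj !oe_add // addrAC subrr add0r. Qed.

Lemma cj_comm k l i j b c : dp k l -> comm k l i j ->
  cj (oe k l b) (oe k l (-b)) (oe i j c) = oe i j c.
Proof. by move=> H C; rewrite /cj C -mulmxA oe_inv // mulmx1. Qed.

Lemma cj_sum k l i j p q e b c : dp k l ->
  (forall a b : R, oe k l b *m oe i j a = oe p q (e * b * a) *m oe i j a *m oe k l b) ->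
  cj (oe k l b) (oe k l (-b)) (oe i j c) = oe p q (e * b * c) *m oe i j c.
Proof. by move=> H C; rewrite /cj C -!mulmxA oe_inv // mulmx1. Qed.

Lemma Q k l i j b c : dp k l -> dp i j -> ~~ same k l j i -> c \in I ->
  gen rootI (cj (oe k l b) (oe k l (-b)) (oe i j c)).
Proof.
move=> Hkl Hij Ho Hc.
case Hs: (same k l i j).
  move: Hs; rewrite /same; case/orP => /andP [/eqP -> /eqP ->].
    by rewrite cj_same //; apply: gen_mem; exists i, j, c.
  have E := @cj_same i j (- b) c Hij.
  rewrite (oe_flip i j (- b)) (oe_flip i j (- - b)) !opprK in E; rewrite E.
  by apply: gen_mem; exists i, j, c.
have [C|[p [q [e [Hpq C _ _ _]]]]] := classify Hkl Hij (negbT Hs) Ho.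
  by rewrite cj_comm //; apply: gen_mem; exists i, j, c.
rewrite (cj_sum _ _ Hkl C); apply: gen_mul; apply: gen_mem.
  by exists p, q, (e * b * c); split => //; apply: memI_mull.
by exists i, j, c.
Qed.


Lemma cj_cj h1 hi1 h2 hi2 y : cj h1 hi1 (cj h2 hi2 y) = cj (h1 *m h2) (hi2 *m hi1) y.
Proof. by rewrite /cj !mulmxA. Qed.

Lemma cj_mul h hi y z : hi *m h = 1%:M -> cj h hi (y *m z) = cj h hi y *m cj h hi z.
Proof. by move=> E; rewrite /cj !mulmxA -(mulmxA _ hi h) E mulmx1. Qed.

Lemma cj_merge i j a b y : dp i j ->
  cj (oe i j b) (oe i j (-b)) (cj (oe i j a) (oe i j (-a)) y) =
  cj (oe i j (b + a)) (oe i j (-(b + a))) y.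
Proof. by move=> H; rewrite cj_cj !oe_add //; congr (cj _ (oe _ _ _) _); ring. Qed.

Lemma NH k l i j a b c : dp k l -> dp i j -> ~~ same k l i j -> c \in I ->
  N (cj (oe k l b) (oe k l (-b)) (cj (oe j i a) (oe j i (-a)) (oe i j c))).
Proof.
move=> Hkl Hij Ho Hc; have Hji := dp_sym Hij.
case Hs: (same k l j i).
  move: Hs; rewrite /same; case/orP => /andP [/eqP -> /eqP ->].
    rewrite cj_merge //; apply: gen_mem; exists j, i, i, j, (b + a), c; split => //.
  have -> : oe (sg i) (sg j) b = oe j i (- b) by rewrite (oe_flip j i) opprK.
  have -> : oe (sg i) (sg j) (- b) = oe j i (- - b) by rewrite (oe_flip j i) opprK.
  rewrite cj_merge //; apply: gen_mem; exists j, i, i, j, (- b + a), c; split => //.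
have [C|[p [q [e [Hpq C Cs Cv Hv]]]]] := classify Hkl Hji (negbT Hs) Ho.
  rewrite !cj_cj (C a b) -(C (-a) (-b)) -cj_cj.
  by apply: rootI_N => //; apply: Q => //; rewrite Hs.
rewrite cj_cj.
have Ei : oe j i (-a) *m oe k l (-b) =
    oe k l (-b) *m oe j i (-a) *m oe p q (- (e * b * a)).
  apply: (inv_uniq (A := oe k l b *m oe j i a)).
    by rewrite -mulmxA (mulmxA (oe j i a)) oe_inv // mul1mx oe_inv.
  rewrite (C a b) -!mulmxA (mulmxA (oe p q _)) oe_invl // mul1mx.
  by rewrite (mulmxA (oe j i (-a))) oe_invl // mul1mx oe_invl.
rewrite Ei (C a b) -(mulmxA (oe k l (-b))) -cj_cj (cj_comm _ _ Hkl Cs).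
rewrite (Cv a (e * b * a)) -(Cv (-a) (- (e * b * a))) -cj_cj.
by apply: rootI_N => //; apply: Q.
Qed.


Lemma third2 (x y : 'I_m) : exists h : 'I_m, dp h x /\ dp h y.
Proof.
pose h0 := (if (x %/ 2 != 0) && (y %/ 2 != 0) then 0
            else if (x %/ 2 != 1) && (y %/ 2 != 1) then 2 else 4)%N.
have Hh : (h0 < m)%N.
  by rewrite /h0; case: ifP => _; try case: ifP => _; lia.
exists (Ordinal Hh); rewrite /dp /= /h0.
case: ifP => /andP.
  by case=> /eqP H1 /eqP H2; split; lia.
move=> H; case: ifP => /andP.
  by case=> /eqP H1 /eqP H2; split; lia.
move=> H'; split; lia.
Qed.

Lemma CFc a b d (x y : R) : dp a b -> dp b d -> dp a d ->
  oe a d (x * y) = oe a b x *m oe b d y *m oe a b (- x) *m oe b d (- y).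
Proof.
move=> H1 H2 H3; rewrite CF // -!mulmxA (mulmxA (oe a b x)) oe_inv // mul1mx.
by rewrite oe_inv // mulmx1.
Qed.

Lemma mul4 (A B C D : M) : A *m B *m C *m D = A *m cj B D C.
Proof. by rewrite /cj !mulmxA. Qed.

Lemma mul4' (A B C D : M) : A *m B *m C *m D = cj A C B *m D.
Proof. by rewrite /cj. Qed.

Definition Ph (i j h : 'I_m) (g : M) := exists d, d \in I /\ (g = oe i h d \/ g = oe j h d).

Lemma HARD i j a b c : dp i j -> c \in I ->
  N (cj (oe i j b) (oe i j (-b)) (cj (oe j i a) (oe j i (-a)) (oe i j c))).
Proof.
move=> Hij Hc; have Hji := dp_sym Hij.
have [h [Hhi Hhj]] := third2 i j.
have Hih := dp_sym Hhi; have Hjh := dp_sym Hhj.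
have EW : (oe j i (-a) *m oe i j (-b)) *m (oe i j b *m oe j i a) = 1%:M.
  by rewrite -mulmxA (mulmxA (oe i j (-b))) oe_invl // mul1mx oe_invl.
have EW' : (oe i j b *m oe j i a) *m (oe j i (-a) *m oe i j (-b)) = 1%:M.
  by rewrite -mulmxA (mulmxA (oe j i a)) oe_inv // mul1mx oe_inv.
rewrite cj_cj -[c]mulr1 (@CFc i h j c 1 Hih Hhj Hij) !cj_mul //.
have Ha : forall d, d \in I ->
   N (cj (oe i j b *m oe j i a) (oe j i (-a) *m oe i j (-b)) (oe i h d)).
  move=> d Hd; rewrite -cj_cj; apply: rootI_N => //; apply: Q => //.
  by rewrite /same; bools.
have Eb : cj (oe i j b *m oe j i a) (oe j i (-a) *m oe i j (-b)) (oe h j 1) =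
    oe h i (- (1 * a)) *m oe h j (- (- (1 * a) * b) + 1).
  rewrite -cj_cj {2}/cj (@conjCF' h j i 1 a Hhj Hji Hhi) cj_mul ?oe_invl //.
  rewrite {1}/cj (@conjCF' h i j (- (1 * a)) b Hhi Hij Hhj) (cj_comm _ _ Hij (comm_second Hij Hhj)).
  by rewrite (comm_first Hhj Hhi) -mulmxA oe_add.
set a1 := - (1 * a); set f1 := - (- (1 * a) * b) + 1.
have Eb' : cj (oe i j b *m oe j i a) (oe j i (-a) *m oe i j (-b)) (oe h j (- 1)) =
    oe h j (- f1) *m oe h i (- a1).
  apply: (inv_uniq (A := oe h i a1 *m oe h j f1)).
    by rewrite -Eb -cj_mul // oe_inv // /cj mulmx1 EW'.
  by rewrite -mulmxA (mulmxA (oe h i (- a1))) oe_invl // mul1mx oe_invl.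
have Ea : cj (oe i j b *m oe j i a) (oe j i (-a) *m oe i j (-b)) (oe i h (- c)) =
    oe i h (b * (a * - c)) *m oe j h (a * - c) *m oe i h (- c).
  rewrite -cj_cj {2}/cj (@conjCF j i h a (- c) Hji Hih Hjh) cj_mul ?oe_invl //.
  by rewrite {1}/cj (@conjCF i j h b (a * - c) Hij Hjh Hih) (cj_comm _ _ Hij (comm_first Hij Hih)).
rewrite mul4 Eb Eb' Ea.
apply: gen_mul; first by apply: Ha.
apply: (@gen_conj (Ph i j h)).
- by rewrite -mulmxA (mulmxA (oe h j f1)) oe_inv // mul1mx oe_inv.
- by rewrite -mulmxA (mulmxA (oe h i (- a1))) oe_invl // mul1mx oe_invl.
- move=> g [d [Hd [->|->]]]; rewrite -cj_cj.
    apply: rootI_N => //; apply: Q => //; by rewrite /same; bools.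
  apply: NH => //; by rewrite /same; bools.
- apply: gen_mul; [apply: gen_mul|]; apply: gen_mem.
  + by exists (b * (a * - c)); split; [apply: memI_mull; apply: memI_mull; apply: memI_N | left].
  + by exists (a * - c); split; [apply: memI_mull; apply: memI_N | right].
  + by exists (- c); split; [apply: memI_N | left].
Qed.


Lemma Z_norm k l i j a b c : dp k l -> dp i j -> c \in I ->
  N (cj (oe k l b) (oe k l (-b)) (cj (oe j i a) (oe j i (-a)) (oe i j c))).
Proof.
move=> Hkl Hij Hc.
case Hs: (same k l i j); last by apply: NH => //; rewrite Hs.
move: Hs; rewrite /same; case/orP => /andP [/eqP -> /eqP ->]; first exact: HARD.
have -> : oe (sg j) (sg i) b = oe i j (- b) by rewrite (oe_flip i j) opprK.
have -> : oe (sg j) (sg i) (- b) = oe i j (- - b) by rewrite (oe_flip i j) opprK.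
exact: HARD.
Qed.

Lemma NORMAL k l b g : dp k l -> Sg g -> N (cj (oe k l b) (oe k l (-b)) g).
Proof.
move=> Hkl [u1 [u2 [t1 [t2 [a [c [Hu Ht Hc ->]]]]]]].
case Ho: (same u1 u2 t2 t1).
  move: Ho; rewrite /same; case/orP => /andP [/eqP -> /eqP ->]; first exact: Z_norm.
  have -> : oe (sg t1) (sg t2) a = oe t2 t1 (- a) by rewrite (oe_flip t2 t1) opprK.
  have -> : oe (sg t1) (sg t2) (- a) = oe t2 t1 (- - a) by rewrite (oe_flip t2 t1) opprK.
  exact: Z_norm.
by apply: rootI_N => //; apply: Q => //; rewrite Ho.
Qed.

Lemma N_conj k l b y : dp k l -> N y -> N (cj (oe k l b) (oe k l (-b)) y).
Proof.
move=> Hkl; apply: gen_conj; [exact: oe_inv | exact: oe_invl |].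
by move=> g Hg; apply: NORMAL.
Qed.

Lemma N_EO g : EO g -> exists gi, [/\ g *m gi = 1%:M, gi *m g = 1%:M,
   (forall y, N y -> N (cj g gi y)) & (forall y, N y -> N (cj gi g y))].
Proof.
elim=> [|x [i [j [z [Hadm ->]]]]|x z _ [xi [E1 E2 C1 C2]] _ [zi [F1 F2 D1 D2]]
        |x y _ [xi [E1 E2 C1 C2]] Exy Eyx].
- exists 1%:M; split; rewrite ?mulmx1 // => y Hy; by rewrite /cj mulmx1 mul1mx.
- move/adm_dp: Hadm => Hij; exists (oe i j (- z)); split.
  + exact: oe_inv.
  + exact: oe_invl.
  + by move=> y Hy; apply: N_conj.
  + by move=> y Hy; rewrite -{2}(opprK z); apply: N_conj.
- exists (zi *m xi); split.
  + by rewrite -mulmxA (mulmxA z) F1 mul1mx.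
  + by rewrite -mulmxA (mulmxA xi) E2 mul1mx.
  + by move=> y Hy; rewrite -cj_cj; apply: C1; apply: D1.
  + by move=> y Hy; rewrite -cj_cj; apply: D2; apply: C2.
- have Exi : xi = y by apply: (inv_uniq E1 Eyx).
  subst xi; exists x; split => //.
Qed.

Lemma EOI_N g : EO_ideal I g -> N g.
Proof.
move=> Hg; apply: rootI_N0; apply: (gen_sub _ Hg).
move=> h [i [j [x [Hadm Hx ->]]]]; apply: gen_mem; exists i, j, x; split => //.
exact/adm_dp.
Qed.

Lemma EOrel_N g : EO_rel I g -> N g.
Proof.
apply: gen_sub => h [g0 [k [x [Hg0 E1 E2 Hx ->]]]].
have [gi [F1 F2 C1 C2]] := N_EO Hg0.
have Ek : gi = k by apply: (inv_uniq F1 E2).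
subst gi; exact: (C1 _ (EOI_N Hx)).
Qed.


Lemma m0 : (0 < m)%N. Proof. lia. Qed.
Definition o0 : 'I_m := Ordinal m0.
Local Notation Hs := (@EO1_rel R n I).

Lemma dp_sgL a b : dp a b -> dp (sg a) b. Proof. lia'. Qed.
Lemma dp_sgR a b : dp a b -> dp a (sg b). Proof. lia'. Qed.
Lemma dp_sgsw a b : dp a (sg b) -> dp (sg a) b. Proof. lia'. Qed.

Lemma HA j a : dp j o0 -> Hs (oe o0 j a).
Proof. move=> H; apply: gen_mem; left; exists o0, j, a; split => //; move: H; rewrite /dp /=; lia. Qed.

Lemma HB j x : dp j o0 -> x \in I -> Hs (oe j o0 x).
Proof. move=> H Hx; apply: gen_mem; right; exists j, o0, x; split => //; move: H; rewrite /dp /=; lia. Qed.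

Lemma Hs_cj h hi y : Hs h -> Hs hi -> Hs y -> Hs (cj h hi y).
Proof. by move=> *; rewrite /cj; apply: gen_mul => //; apply: gen_mul. Qed.

Lemma rootI_H i j x : dp i j -> x \in I -> Hs (oe i j x).
Proof.
move=> Hij Hx; have Hji := dp_sym Hij.
case E1: (i == o0); first by move/eqP: E1 => E1; subst i; apply: HA.
case E2: (i == sg o0).
  move/eqP: E2 => E2; subst i; rewrite oe_flip sgK; apply: HB; last exact: memI_N.
  by apply: dp_sgL; apply: dp_sym.
case E3: (j == o0); first by move/eqP: E3 => E3; subst j; apply: HB.
case E4: (j == sg o0).
  move/eqP: E4 => E4; subst j; rewrite oe_flip sgK; apply: HA.
  by apply: dp_sgL.
have Hi0 : dp i o0 by apply: dp_of.
have Hj0 : dp j o0 by apply: dp_of.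
rewrite -[x]mulr1 (@CFc i o0 j x 1 Hi0 (dp_sym Hj0) Hij).
apply: gen_mul; [apply: gen_mul; [apply: gen_mul|]|].
- by apply: HB.
- by apply: HA.
- by apply: HB => //; apply: memI_N.
- by apply: HA.
Qed.

Lemma gen_rootI_H y : gen rootI y -> Hs y.
Proof. by apply: gen_sub => g [i [j [x [Hij Hx ->]]]]; apply: rootI_H. Qed.

Lemma ZH2 i j a c : dp i o0 -> dp j o0 -> dp i j -> c \in I ->
  Hs (cj (oe j i a) (oe j i (-a)) (oe i j c)).
Proof.
move=> Hi0 Hj0 Hij Hc; have Hji := dp_sym Hij.
have H0i := dp_sym Hi0; have H0j := dp_sym Hj0.
rewrite -[c]mulr1 (@CFc i o0 j c 1 Hi0 H0j Hij) !cj_mul ?oe_invl //.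
apply: gen_mul; [apply: gen_mul; [apply: gen_mul|]|].
- rewrite /cj (@conjCF j i o0 a c Hji Hi0 Hj0).
  by apply: gen_mul; apply: HB => //; apply: memI_mull.
- rewrite /cj (@conjCF' o0 j i 1 a H0j Hji H0i).
  by apply: gen_mul; apply: HA.
- rewrite /cj (@conjCF j i o0 a (- c) Hji Hi0 Hj0).
  by apply: gen_mul; apply: HB => //; [apply: memI_mull|]; apply: memI_N.
- rewrite /cj (@conjCF' o0 j i (- 1) a H0j Hji H0i).
  by apply: gen_mul; apply: HA.
Qed.

Lemma ZH0 j a c : dp j o0 -> c \in I ->
  Hs (cj (oe j o0 a) (oe j o0 (-a)) (oe o0 j c)).
Proof.
move=> Hj0 Hc; have H0j := dp_sym Hj0.
have [h [Hh0 Hhj]] := third2 o0 j.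
have H0h := dp_sym Hh0; have Hjh := dp_sym Hhj.
rewrite -[c]mul1r (@CFc o0 h j 1 c H0h Hhj H0j) !cj_mul ?oe_invl //.
have P1 : cj (oe j o0 a) (oe j o0 (-a)) (oe o0 h 1) = oe o0 h 1 *m oe j h a.
  by rewrite /cj (@conjCF j o0 h a 1 Hj0 H0h Hjh) mulr1 (comm_second Hjh H0h).
have P2 : cj (oe j o0 a) (oe j o0 (-a)) (oe o0 h (-1)) = oe j h (-a) *m oe o0 h (-1).
  by rewrite /cj (@conjCF j o0 h a (-1) Hj0 H0h Hjh) mulrN1.
have Q1 : cj (oe j o0 a) (oe j o0 (-a)) (oe h j c) = oe h o0 (-(c * a)) *m oe h j c.
  by rewrite /cj (@conjCF' h j o0 c a Hhj Hj0 Hh0).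
have Q2 : cj (oe j o0 a) (oe j o0 (-a)) (oe h j (-c)) = oe h o0 (-(-c * a)) *m oe h j (-c).
  by rewrite /cj (@conjCF' h j o0 (-c) a Hhj Hj0 Hh0).
rewrite mul4' P1 P2 Q1 Q2 -cj_cj.
apply: gen_mul.
  apply: Hs_cj; [exact: HA | exact: HA |].
  rewrite cj_mul ?oe_invl //; apply: gen_mul.
    rewrite /cj (@conjCF j h o0 a (- (c * a)) Hjh Hh0 Hj0).
    by apply: gen_mul; apply: HB => //; [apply: memI_mull|]; apply: memI_N; apply: memI_mulr.
  exact: ZH2.
apply: gen_mul; apply: rootI_H => //; last exact: memI_N.
by apply: memI_N; apply: memI_mulr; apply: memI_N.
Qed.


Lemma ZH i j a c : dp i j -> c \in I -> Hs (cj (oe j i a) (oe j i (-a)) (oe i j c)).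
Proof.
move=> Hij Hc; have Hji := dp_sym Hij.
case E1: (i == o0); first by move/eqP: E1 => E1; subst i; apply: ZH0.
case E2: (i == sg o0).
  move/eqP: E2 => E2; subst i.
  rewrite (oe_flip (sg o0)) (oe_flip j (sg o0)) (oe_flip j (sg o0) (- a)) !sgK.
  apply: Hs_cj; [apply: HA | apply: HA | apply: HB]; try exact: memI_N.
  all: try exact: (dp_sgsw Hji).
case E3: (j == o0).
  move/eqP: E3 => E3; subst j.
  by apply: Hs_cj; [apply: HA | apply: HA | apply: HB].
case E4: (j == sg o0).
  move/eqP: E4 => E4; subst j.
  rewrite (oe_flip i (sg o0)) (oe_flip (sg o0) i) (oe_flip (sg o0) i (- a)) !sgK.
  apply: ZH0; last exact: memI_N.
  exact: (dp_sgsw Hij).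
have Hi0 : dp i o0 by apply: dp_of.
have Hj0 : dp j o0 by apply: dp_of.
exact: ZH2.
Qed.

Lemma Sg_H g : Sg g -> Hs g.
Proof.
move=> [k [l [i [j [a [c [Hkl Hij Hc ->]]]]]]].
case Ho: (same k l j i); last by apply: gen_rootI_H; apply: Q => //; rewrite Ho.
move: Ho; rewrite /same; case/orP => /andP [/eqP -> /eqP ->]; first exact: ZH.
have -> : oe (sg i) (sg j) a = oe j i (- a) by rewrite (oe_flip j i) opprK.
have -> : oe (sg i) (sg j) (- a) = oe j i (- - a) by rewrite (oe_flip j i) opprK.
exact: ZH.
Qed.

Lemma EO_rel_H g : EO_rel I g -> Hs g.
Proof. by move=> Hg; apply: (gen_sub Sg_H); apply: EOrel_N. Qed.

End Main.

Theorem mainTheorem3 (R : comNzRingType) (I : {pred R}) (n : nat) :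
  is_ideal I -> (3 <= n)%N ->
  forall g : 'M[R]_(2 * n), EO_rel I g -> EO1_rel I g.
Proof. by move=> HI Hn g Hg; apply: (@EO_rel_H R n I HI Hn g Hg). Qed.
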